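(* (i) Let $G=(V,E)$ be a complete graph on $n\ge 2$ vertices with distinct positive edge weights, and let $k\in\{1,\dots,n-1\}$. Then the graph $(V,M_k(G))$ is $k$-constructible. (ii) Let $G=(V,E)$ be a $k$-constructible graph. Then there exist distinct positive edge weights on the complete graph $\widetilde G=(V,\widetilde E)$ on vertex set $V$ such that $E\subseteq M_k(\widetilde G)$.
   Context: For a complete graph $H=(V,F)$ on $n$ vertices with distinct positive edge weights and $k\in\{1,\dots,n-1\}$, $M_k(H)=\bigcup_{X\subseteq V,\,|X|=k-1}\mathrm{MST}(H[V\setminus X])$, where $H[V\setminus X]$ is the induced weighted subgraph and $\mathrm{MST}$ denotes the edge set of its (unique) minimum spanning tree. A graph $G=(V,E)$ is called $k$-constructible if there is an ordering $e_1,\dots,e_m$ of $E$ such that for every $i\in\{1,\dots,m\}$ the graph $(V,\{e_1,\dots,e_{i-1}\})$ contains at most $k-1$ internally vertex-disjoint paths between the two endpoints of $e_i$. *)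

(* Defs.v *)
From HB Require Import structures.
From mathcomp Require Import all_boot all_order all_algebra.
Set Implicit Arguments. Unset Strict Implicit. Unset Printing Implicit Defensive.
Import Order.TTheory GRing.Theory Num.Theory.

Section Defs.
Variable V : finType.

Definition is_edge (e : {set V}) : bool := #|e| == 2.

Definition simple_graph (E : {set {set V}}) : bool := [forall e in E, is_edge e].

Definition adj (F : {set {set V}}) : rel V := fun x y => [set x; y] \in F.

(* T is a spanning tree of the complete graph on the vertex set S:
   its edges are 2-subsets of S, (S,T) is connected, and (S,T) is acyclic
   (every edge of T is a bridge). *)
Definition spanning_tree (S : {set V}) (T : {set {set V}}) : bool :=
  [&& [forall e in T, is_edge e && (e \subset S)],
      [forall u in S, forall v in S, connect (adj T) u v] &
      [forall e in T, forall u, forall v,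
         (e == [set u; v]) ==> ~~ connect (adj (T :\ e)) u v]].

Variable R : realFieldType.

Definition weight (w : {set V} -> R) (T : {set {set V}}) : R :=
  (\sum_(e in T) w e)%R.

Definition is_MST (w : {set V} -> R) (S : {set V}) (T : {set {set V}}) : bool :=
  spanning_tree S T &&
  [forall T' : {set {set V}}, spanning_tree S T' ==> (weight w T <= weight w T')%R].

Definition Mk (w : {set V} -> R) (k : nat) : {set {set V}} :=
  \bigcup_(X : {set V} | #|X| == k.-1) \bigcup_(T | is_MST w (~: X) T) T.

Definition good_weights (w : {set V} -> R) : Prop :=
  (forall e, is_edge e -> (0 < w e)%R) /\
  (forall e f, is_edge e -> is_edge f -> w e = w f -> e = f).

(* A u-v path in the graph (V,F), given as its vertex sequence u :: r. *)
Definition uv_path (F : {set {set V}}) (u v : V) (r : seq V) : bool :=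
  [&& path (adj F) u r, last u r == v & uniq (u :: r)].

Definition interior (v : V) (r : seq V) : seq V := filter (predC1 v) r.

Definition disjoint_paths (F : {set {set V}}) (u v : V) (rs : seq (seq V)) : Prop :=
  uniq rs /\ all (uv_path F u v) rs /\
  pairwise (fun r1 r2 => [disjoint interior v r1 & interior v r2]) rs.

Definition at_most_disjoint_paths (F : {set {set V}}) (u v : V) (m : nat) : Prop :=
  forall rs, disjoint_paths F u v rs -> size rs <= m.

Definition k_constructible (k : nat) (E : {set {set V}}) : Prop :=
  exists s : seq {set V},
    uniq s /\ s =i E /\
    forall i, i < size s -> forall u v : V,
      nth set0 s i = [set u; v] ->
      at_most_disjoint_paths [set x in take i s] u v k.-1.

End Defs.

(* Main.v *)
Require Import Defs.
From mathcomp Require Import all_boot all_order all_algebra.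
From mathcomp Require Import zify lra.
Set Implicit Arguments. Unset Strict Implicit. Unset Printing Implicit Defensive.
Import Order.TTheory GRing.Theory Num.Theory.

Section Basics.
Variable V : finType.
Implicit Types (F T G : {set {set V}}) (S X W : {set V}).

Lemma disjP (A B : {pred V}) :
  reflect (forall z, z \in A -> z \in B -> False) [disjoint A & B].
Proof.
rewrite /disjoint; apply: (iffP pred0P) => [H z zA zB | H z].
  by have := H z; rewrite /= zA zB.
by apply/negbTE/andP => [[]]; apply: H.
Qed.

Lemma adj_sym F : symmetric (adj F).
Proof. by move=> x y; rewrite /adj setUC. Qed.

Lemma csym F : connect_sym (adj F).
Proof. exact: sym_connect_sym (adj_sym F). Qed.

Lemma adj_sub F F' : F \subset F' -> subrel (adj F) (adj F').
Proof. by move=> /subsetP H x y; rewrite /adj => /H. Qed.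

Lemma connect_mono (e e' : rel V) : subrel e e' -> subrel (connect e) (connect e').
Proof. by move=> H; apply: connect_sub => x y /H; apply: connect1. Qed.

Lemma connect_subF F F' : F \subset F' -> subrel (connect (adj F)) (connect (adj F')).
Proof. by move=> H; apply/connect_mono/adj_sub. Qed.

Lemma set2_eq (a b c d : V) : a != b -> [set a; b] = [set c; d] ->
  (c = a /\ d = b) \/ (c = b /\ d = a).
Proof.
move=> ab E.
have : c \in [set a; b] by rewrite E set21.
have : d \in [set a; b] by rewrite E set22.
have : a \in [set c; d] by rewrite -E set21.
have : b \in [set c; d] by rewrite -E set22.
rewrite !inE => /orP[]/eqP-> /orP[]/eqP-> /orP[]/eqP ? /orP[]/eqP ?; subst;
  rewrite ?eqxx in ab; auto.
Qed.

Lemma in_set2_edge (a b c d : V) : a \in [set c; d] -> a = c \/ a = d.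
Proof. by rewrite !inE => /orP[]/eqP; auto. Qed.

Lemma connect_add F a b z w : a != b ->
  connect (adj ([set a; b] |: F)) z w ->
  connect (adj F) z w \/ (connect (adj F) z a /\ connect (adj F) b w) \/
  (connect (adj F) z b /\ connect (adj F) a w).
Proof.
move=> ab /connectP[p pth ->]; elim: p z pth => [|y p IH] z /=.
  by move=> _; left; apply: connect0.
case/andP => hzy /IH {IH} IH.
rewrite /adj in_setU1 in hzy; case/orP: hzy => [/eqP E | hF].
  have [[? ?]|[? ?]] := set2_eq ab (esym E); subst z y.
    case: IH => [H|[[H1 H2]|[H1 H2]]].
    - by right; left; split; [apply: connect0 | ].
    - by right; left; split; [apply: connect0 | ].
    - by left.
  case: IH => [H|[[H1 H2]|[H1 H2]]].
  - by right; right; split; [apply: connect0 | ].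
  - by left.
  - by right; right; split; [apply: connect0 | ].
have hc : connect (adj F) z y by apply: connect1.
case: IH => [H|[[H1 H2]|[H1 H2]]].
- by left; apply: connect_trans hc H.
- by right; left; split => //; apply: connect_trans hc H1.
- by right; right; split => //; apply: connect_trans hc H1.
Qed.

Lemma path_del F a b x q : b \notin x :: q -> path (adj F) x q ->
  path (adj (F :\ [set a; b])) x q.
Proof.
move=> bq; apply: (@sub_in_path _ (predC1 b)); last first.
  by apply/allP => z zq /=; apply: contraNneq bq => <-.
move=> c d /= cb db; rewrite /adj !inE => ->; rewrite andbT.
apply/eqP => E; have : b \in [set c; d] by rewrite E set22.
by rewrite !inE ![b == _]eq_sym (negbTE cb) (negbTE db).
Qed.

Lemma spanning_treeP S T : spanning_tree S T <->
  [/\ (forall e, e \in T -> is_edge e /\ e \subset S),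
      (forall u v, u \in S -> v \in S -> connect (adj T) u v) &
      (forall e u v, e \in T -> e = [set u; v] -> ~~ connect (adj (T :\ e)) u v)].
Proof.
split.
  case/and3P => /forallP H1 /forallP H2 /forallP H3; split.
  - by move=> e eT; have /implyP/(_ eT)/andP[] := H1 e.
  - by move=> u v uS vS; have /implyP/(_ uS)/forallP/(_ v)/implyP/(_ vS) := H2 u.
  - move=> e u v eT E; have /implyP/(_ eT)/forallP/(_ u)/forallP/(_ v)/implyP := H3 e.
    by apply; rewrite E.
case=> H1 H2 H3; apply/and3P; split.
- by apply/forallP => e; apply/implyP => eT; have [-> ->] := H1 e eT.
- by apply/forallP => u; apply/implyP => uS; apply/forallP => v; apply/implyP; apply: H2.
- apply/forallP => e; apply/implyP => eT; apply/forallP => u; apply/forallP => v.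
  by apply/implyP => /eqP; apply: H3.
Qed.

Lemma edge2 (e : {set V}) : is_edge e -> exists a b, a != b /\ e = [set a; b].
Proof. by move=> /cards2P. Qed.

Lemma exchange S T g f x y : spanning_tree S T -> g \in T -> f = [set x; y] ->
  x != y -> x \in S -> y \in S -> ~~ connect (adj (T :\ g)) x y ->
  spanning_tree S (f |: (T :\ g)).
Proof.
move=> /spanning_treeP [H1 H2 H3] gT -> xy xS yS nxy.
set T0 := T :\ g.
have [ge gS] := H1 g gT; have [a [b [ab gE]]] := edge2 ge.
have TE : T = [set a; b] |: T0 by rewrite /T0 -gE setD1K.
have fT0 : [set x; y] \notin T0.
  by apply: contra nxy => H; apply: connect1; rewrite /adj.
have T0T : T0 \subset T by apply: subD1set.
have T0T' : T0 \subset [set x; y] |: T0 by apply: subsetU1.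
have cxy : connect (adj ([set x; y] |: T0)) x y.
  by apply: connect1; rewrite /adj setU11.
have cab : connect (adj ([set x; y] |: T0)) a b.
  have : connect (adj ([set a; b] |: T0)) x y by rewrite -TE; apply: H2.
  move=> /(connect_add ab).
  case=> [H|[[h1 h2]|[h1 h2]]]; first by rewrite H in nxy.
  - rewrite csym in h1; rewrite csym in h2.
    apply: connect_trans (connect_subF T0T' h1) _.
    exact: connect_trans cxy (connect_subF T0T' h2).
  - apply: connect_trans (connect_subF T0T' h2) _.
    apply: connect_trans _ (connect_subF T0T' h1).
    by rewrite csym.
apply/spanning_treeP; split.
- move=> e; rewrite in_setU1 => /orP[/eqP -> | /setD1P[_ /H1] //].
  by rewrite /is_edge cards2 xy subUset !sub1set xS yS.
- move=> u v uS vS.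
  have : connect (adj ([set a; b] |: T0)) u v by rewrite -TE; apply: H2.
  move=> /(connect_add ab).
  case=> [H|[[h1 h2]|[h1 h2]]].
  + by apply: (connect_subF T0T').
  + apply: connect_trans (connect_subF T0T' h1) _.
    exact: connect_trans cab (connect_subF T0T' h2).
  + apply: connect_trans (connect_subF T0T' h1) _.
    by apply: connect_trans _ (connect_subF T0T' h2); rewrite csym.
- move=> e u v; rewrite in_setU1 => /orP[/eqP -> | eT0] E.
    rewrite setU1K //.
    have [[? ?]|[? ?]] := set2_eq xy E; subst u v => //.
    by rewrite csym.
  have efE : e != [set x; y] by apply: contraNneq fT0 => <-.
  have -> : ([set x; y] |: T0) :\ e = [set x; y] |: (T0 :\ e).
    apply/setP => z; rewrite !inE; case: (z =P e) => [->|]; last by [].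
    by rewrite (negbTE efE).
  have [eT0' eT] : e \in T0 /\ e \in T by move: eT0; rewrite /T0 !inE => /andP[-> ->].
  apply/negP => /(connect_add xy).
  have sub : T0 :\ e \subset T :\ e by apply: setSD.
  have pq : connect (adj T0) u v by apply: connect1; rewrite /adj -E.
  have T0e : T0 :\ e \subset T0 by apply: subD1set.
  case=> [H|[[h1 h2]|[h1 h2]]].
  + by have := H3 e u v eT E; rewrite (connect_subF sub H).
  + move/negP: nxy; apply; rewrite csym in h1; rewrite csym in h2.
    apply: connect_trans (connect_subF T0e h1) _.
    exact: connect_trans pq (connect_subF T0e h2).
  + move/negP: nxy; apply.
    apply: connect_trans (connect_subF T0e h2) _.
    rewrite csym in pq; apply: connect_trans pq _.
    by apply: (connect_subF T0e).
Qed.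

End Basics.

Section Trees.
Variable V : finType.
Implicit Types (F T G : {set {set V}}) (S X W : {set V}).

Lemma isolated_connect (e : rel V) z a : (forall c, ~~ e z c) -> connect e z a -> a = z.
Proof.
move=> H /connectP[[|c p] /= pth ->] //.
by case/andP: pth => h; rewrite (negbTE (H c)) in h.
Qed.

Lemma star_tree S c : c \in S -> spanning_tree S [set [set c; z] | z in S :\ c].
Proof.
move=> cS; set T := [set _ | _ in _].
have adjc z : z \in S -> connect (adj T) c z.
  move=> zS; case: (z =P c) => [->|/eqP zc]; first exact: connect0.
  by apply: connect1; rewrite /adj; apply/imsetP; exists z => //; rewrite !inE zc.
apply/spanning_treeP; split.
- move=> e /imsetP[z]; rewrite !inE => /andP[zc zS] ->.
  by rewrite /is_edge cards2 [c == _]eq_sym zc subUset !sub1set cS zS.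
- move=> u v uS vS; apply: connect_trans (adjc v vS); rewrite csym; exact: adjc.
- move=> e u v /imsetP[z]; rewrite !inE => /andP[zc zS] -> E.
  have iso : forall w, ~~ adj (T :\ [set c; z]) z w.
    move=> w; rewrite /adj !inE; apply/negP => /andP[ne /imsetP[z']].
    rewrite !inE => /andP[z'c _] E'.
    have : z \in [set c; z'] by rewrite -E' set21.
    rewrite !inE (negbTE zc) /= => /eqP zz'; subst z'.
    by rewrite E' setUC eqxx in ne.
  have cz : c != z by rewrite eq_sym.
  have [[? ?]|[? ?]] := set2_eq cz E; subst u v.
    by apply/negP; rewrite csym => /(isolated_connect iso) E1; rewrite E1 eqxx in cz.
  by apply/negP => /(isolated_connect iso) E1; rewrite E1 eqxx in cz.
Qed.

Variable R : realFieldType.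

Lemma MST_exists (w : {set V} -> R) S c : c \in S -> exists T, is_MST w S T.
Proof.
move=> cS; have st := star_tree cS.
case: (arg_minP (weight w) st) => T HT Hmin.
by exists T; rewrite /is_MST HT; apply/forallP => T'; apply/implyP; apply: Hmin.
Qed.

Lemma is_MSTP (w : {set V} -> R) S T : is_MST w S T ->
  spanning_tree S T /\ forall T', spanning_tree S T' -> (weight w T <= weight w T')%R.
Proof.
case/andP => -> /forallP H; split => // T'; exact/implyP/H.
Qed.

Lemma weight_exch (w : {set V} -> R) T g f : g \in T -> f \notin T :\ g ->
  weight w (f |: (T :\ g)) = (w f + weight w T - w g)%R.
Proof.
move=> gT fT; rewrite /weight big_setU1 //= (big_setD1 _ gT) /=.
by rewrite [(w g + _)%R]addrC addrA addrK.
Qed.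

End Trees.

Section Cross.
Variable V : finType.

Lemma cross (e : rel V) (P : pred V) x p : path e x p -> P x -> ~~ P (last x p) ->
  exists a b, [/\ e a b, P a & ~~ P b].
Proof.
elim: p x => [|y p IH] x /=; first by move=> _ ->.
case/andP => exy pth Px; case Py: (P y).
  by move=> /(IH y pth Py).
by move=> _; exists x, y; rewrite Py.
Qed.

Lemma cross_uniq (e : rel V) (P : pred V) x p : path e x p -> uniq (x :: p) -> P x ->
  ~~ P (last x p) ->
  exists a b, [/\ e a b, P a, ~~ P b, a \in x :: p & b \in p] /\
    exists q1 q2, [/\ path e x q1, last x q1 = a & b \notin x :: q1] /\
      [/\ path e b q2, last b q2 = last x p & a \notin b :: q2].
Proof.
elim: p x => [|y p IH] x /=; first by move=> _ _ ->.
case/andP => exy pth /andP[xyp uyp] Px; case Py: (P y).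
  move=> /(IH y pth uyp Py) [a [b [[eab Pa Pb ap bp] [q1 [q2 [[h1 h2 h3] [h4 h5 h6]]]]]]].
  exists a, b; split.
    split => //; first by rewrite inE ap orbT.
    by rewrite inE bp orbT.
  exists (y :: q1), q2; split => //; split => //=; first by rewrite exy.
  rewrite inE negb_or h3 andbT; apply: contraNneq xyp => <-.
  by rewrite inE bp orbT.
move=> _; exists x, y; split.
  by split => //; rewrite ?Py // inE eqxx.
exists [::], p; split; split => //=.
by rewrite inE; apply: contraNneq xyp => ->; rewrite inE eqxx.
Qed.

End Cross.

Lemma sub_in_count' (T : eqType) (a1 a2 : pred T) (s : seq T) :
  {in s, subpred a1 a2} -> count a1 s <= count a2 s.
Proof.
elim: s => //= x s IH H; apply: leq_add.
  by case h: (a1 x) => //; rewrite (H x (mem_head _ _) h).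
by apply: IH => y ys; apply: H; rewrite inE ys orbT.
Qed.

Section Part1.
Variable V : finType.
Variable R : realFieldType.

Lemma count_meet (X : {set V}) v (rs : seq (seq V)) :
  pairwise (fun r1 r2 => [disjoint interior v r1 & interior v r2]) rs ->
  count (fun r => has (mem X) (interior v r)) rs <= #|X|.
Proof.
elim: rs X => [|r rs IH] X //=.
move=> /andP[/allP hall hpw].
case: (boolP (has (mem X) (interior v r))) => [/hasP[x0 x0r x0X] | _]; last first.
  by rewrite add0n; apply: IH.
have x0X' : x0 \in X by [].
rewrite add1n (cardsD1 x0 X) x0X' add1n ltnS; apply: leq_trans (IH _ hpw).
apply: sub_in_count' => r' r'rs /hasP[z zr' zX]; apply/hasP; exists z => //.
have zX' : z \in X by []. 
rewrite !inE zX' andbT; apply: contraTneq zr' => ->.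
by apply/negP => h; move/disjP: (hall r' r'rs) => /(_ x0 x0r h).
Qed.

Lemma part1 (w : {set V} -> R) k : good_weights w -> k_constructible k (Mk w k).
Proof.
move=> [wpos winj].
set M := Mk w k.
have Medge : forall e, e \in M -> is_edge e.
  move=> e /bigcupP[X _ /bigcupP[T /is_MSTP[/spanning_treeP[H1 _ _] _] eT]].
  by have [] := H1 e eT.
pose le := fun e f : {set V} => (w e <= w f)%R.
have le_tot : total le by move=> e f; exact: le_total.
have le_tr : transitive le by move=> ? ? ?; exact: le_trans.
exists (sort le (enum M)); split; first by rewrite sort_uniq enum_uniq.
split; first by move=> e; rewrite mem_sort mem_enum.
move=> i; set s := sort le (enum M) => isz u v ei.
set e := nth set0 s i in ei.
have suniq : uniq s by rewrite sort_uniq enum_uniq.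
have sM : forall f, f \in s -> f \in M by move=> f; rewrite mem_sort mem_enum.
have eM : e \in M by apply: sM; apply: mem_nth.
have light : forall f, f \in take i s -> (w f < w e)%R.
  move=> f fi.
  have jlt : index f (take i s) < size (take i s) by rewrite index_mem.
  set j := index f (take i s) in jlt.
  have jlti : j < i by move: jlt; rewrite size_takel // ltnW.
  have fj : nth set0 s j = f by rewrite -(nth_take set0 jlti) nth_index.
  have js : j < size s by apply: ltn_trans jlti isz.
  have fe : f != e by rewrite -fj /e nth_uniq // neq_ltn jlti.
  have lefe : le f e.
    by rewrite -fj; apply: (sorted_ltn_nth le_tr set0 (sort_sorted le_tot _)).
  rewrite lt_neqAle (_ : (w f <= w e)%R = true) // andbT; apply: contra fe => /eqP E.
  apply/eqP; apply: winj => //; apply: Medge => //; apply: sM => //.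
  exact: mem_take fi.
move=> rs [rsu [rsall rspw]].
move: eM; rewrite /M /Mk => /bigcupP[X /eqP cX /bigcupP[T HT eT]].
have [st Tmin] := is_MSTP HT.
have [H1 H2 H3] := (spanning_treeP _ _).1 st.
have [ee eX] := H1 e eT.
have nuv := H3 e u v eT ei.
rewrite leqNgt; apply/negP => big.
pose p := fun r => has (mem X) (interior v r).
have hc : 0 < count (predC p) rs.
  have h1 := count_meet X rspw; have h2 := count_predC p rs; rewrite cX in h1.
  rewrite /p in h2 *; clear -h1 h2 big; lia.
move: hc; rewrite -has_count => /hasP[r rin nh].
move: nh; rewrite /= /p => nh.
have /allP/(_ r rin)/and3P[pth /eqP lst un] := rsall.
set T0 := T :\ e in nuv.
have := cross_uniq (P := connect (adj T0) u) pth un (@connect0 _ (adj T0) u).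
rewrite lst => /(_ nuv) [a [b [[eab Pa Pb ain bin] _]]].
have fi : [set a; b] \in take i s by move: eab; rewrite /adj inE.
have wlt := light _ fi.
have fedge : is_edge [set a; b] by apply: Medge; apply: sM; apply: mem_take fi.
have ab : a != b by move: fedge; rewrite /is_edge cards2; case: (a != b).
have uX : u \in ~: X by apply: (subsetP eX); rewrite ei set21.
have inX : forall z, z \in u :: r -> z \in ~: X.
  move=> z; rewrite inE => /orP[/eqP -> // | zr].
  case: (z =P v) => [-> | /eqP zv].
    by apply: (subsetP eX); rewrite ei set22.
  have zi : z \in interior v r by rewrite /interior mem_filter /= zv zr.
  rewrite inE; apply: contra nh => zX; apply/hasP; exists z => //.
have nab : ~~ connect (adj T0) a b.
  by apply: contra Pb => cab; exact: connect_trans Pa cab.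
have bX : b \in ~: X by apply: inX; rewrite inE bin orbT.
have st' := exchange st eT (erefl _) ab (inX a ain) bX nab.
have fT0 : [set a; b] \notin T0 by apply: contra nab => h; apply: connect1.
have := Tmin _ st'; rewrite weight_exch // addrAC lerDr subr_ge0 => h.
by move: wlt; rewrite ltNge h.
Qed.

End Part1.

Section Menger.
Variable V : finType.
Implicit Types (F G : {set {set V}}) (A B S X W Z T : {set V}).

Definition adjX F S : rel V := fun a b => adj F a b && (a \notin S) && (b \notin S).
Definition sep F A B S : bool :=
  [forall a in A, forall b in B, (a \notin S) ==> ~~ connect (adjX F S) a b].
Definition reach F A S : {set V} :=
  [set z | [exists a in A, (a \notin S) && connect (adjX F S) a z]].
Definition adjIn F W : rel V := fun a b => adj F a b && (a \in W) && (b \in W).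
Definition conn F W : bool := [forall z in W, forall z' in W, connect (adjIn F W) z z'].
Definition goodfam F A B k (Ws : {set {set V}}) : Prop :=
  [/\ #|Ws| = k,
      (forall W1 W2, W1 \in Ws -> W2 \in Ws -> W1 != W2 -> [disjoint W1 & W2]) &
      (forall W, W \in Ws -> [/\ conn F W, exists a, a \in W /\ a \in A &
                                   exists b, b \in W /\ b \in B])].

Lemma sepP F A B S : reflect
  (forall a b, a \in A -> b \in B -> a \notin S -> ~~ connect (adjX F S) a b) (sep F A B S).
Proof.
apply: (iffP forallP) => [H a b aA bB aS | H a].
  by have /implyP/(_ aA)/forallP/(_ b)/implyP/(_ bB)/implyP/(_ aS) := H a.
apply/implyP => aA; apply/forallP => b; apply/implyP => bB; apply/implyP; exact: H.
Qed.

Lemma connP F W : reflect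
  (forall z z', z \in W -> z' \in W -> connect (adjIn F W) z z') (conn F W).
Proof.
apply: (iffP forallP) => [H z z' zW z'W | H z].
  by have /implyP/(_ zW)/forallP/(_ z')/implyP/(_ z'W) := H z.
apply/implyP => zW; apply/forallP => z'; apply/implyP; exact: H.
Qed.

Lemma reachP F A S z : reflect
  (exists a, [/\ a \in A, a \notin S & connect (adjX F S) a z]) (z \in reach F A S).
Proof.
rewrite inE; apply: (iffP existsP) => [[a /andP[aA /andP[aS c]]] | [a [aA aS c]]].
  by exists a.
by exists a; rewrite aA aS c.
Qed.

Lemma adjX_sym F S : symmetric (adjX F S).
Proof. by move=> a b; rewrite /adjX adj_sym; case: (a \in S); case: (b \in S); rewrite ?andbT ?andbF. Qed.

Lemma csymX F S : connect_sym (adjX F S).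
Proof. exact: sym_connect_sym (adjX_sym F S). Qed.

Lemma adjIn_sym F W : symmetric (adjIn F W).
Proof. by move=> a b; rewrite /adjIn adj_sym; case: (a \in W); case: (b \in W); rewrite ?andbT ?andbF. Qed.

Lemma csymIn F W : connect_sym (adjIn F W).
Proof. exact: sym_connect_sym (adjIn_sym F W). Qed.

Lemma connect_inv (e : rel V) (P : pred V) x y :
  (forall a b, P a -> e a b -> P b) -> P x -> connect e x y -> P y.
Proof.
move=> H Px /connectP[p pth ->]; elim: p x Px pth => //= z p IH x Px /andP[exz pth].
exact: IH (H _ _ Px exz) pth.
Qed.

Lemma connX_notin F S a b : a \notin S -> connect (adjX F S) a b -> b \notin S.
Proof.
by apply: (connect_inv (P := fun z => z \notin S)) => c d _ /andP[_ ->].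
Qed.

Lemma connIn_in F W a b : a \in W -> connect (adjIn F W) a b -> b \in W.
Proof.
by apply: (connect_inv (P := fun z => z \in W)) => c d _ /andP[_ ->].
Qed.

Lemma sep_sym F A B S : sep F A B S -> sep F B A S.
Proof.
move/sepP => H; apply/sepP => b a bB aA bS; apply/negP => c.
have aS : a \notin S := connX_notin bS c.
by move/negP: (H a b aA bB aS); apply; rewrite csymX.
Qed.

Lemma reach_notin F A S z : z \in reach F A S -> z \notin S.
Proof. by case/reachP => a [_ aS c]; apply: connX_notin aS c. Qed.

Lemma reach_B F A B S z : sep F A B S -> z \in reach F A S -> z \notin B.
Proof.
move/sepP => H /reachP[a [aA aS c]]; apply/negP => zB.
by move/negP: (H a z aA zB aS).
Qed.

Lemma reach_disj F A B S z : sep F A B S -> z \in reach F A S -> z \in reach F B S -> False.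
Proof.
move/sepP => H /reachP[a [aA aS ca]] /reachP[b [bB bS cb]].
move/negP: (H a b aA bB aS); apply; apply: connect_trans ca _; by rewrite csymX.
Qed.

Lemma reach_closed F A S a b : a \in reach F A S -> adjX F S a b -> b \in reach F A S.
Proof.
case/reachP => a0 [a0A a0S c] h; apply/reachP; exists a0; split => //.
by apply: connect_trans c (connect1 h).
Qed.

Lemma adjX_mono F F' S S' : F \subset F' -> S' \subset S -> subrel (adjX F S) (adjX F' S').
Proof.
move=> FF /subsetP SS a b /andP[/andP[h aS] bS]; rewrite /adjX (adj_sub FF h) /=.
by apply/andP; split; [exact: contra (SS a) aS | exact: contra (SS b) bS].
Qed.

Lemma reach_mono F A S S' z : S \subset S' -> z \in reach F A S' -> z \in reach F A S.
Proof.
move=> SS /reachP[a [aA aS c]]; apply/reachP; exists a; split => //.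
  by apply: contra aS; apply: (subsetP SS).
by apply: connect_mono c; apply: adjX_mono.
Qed.

Lemma sep_closure F A B S (C : {set V}) :
  (forall a, a \in A -> a \notin S -> a \in C) -> (forall z, z \in C -> z \notin B) ->
  (forall z z', z \in C -> adjX F S z z' -> z' \in C) -> sep F A B S.
Proof.
move=> HA HB HC; apply/sepP => a b aA bB aS; apply/negP => c.
have := connect_inv (P := fun z => z \in C) HC (HA a aA aS) c.
by move/HB; rewrite bB.
Qed.

Lemma set2C (a b : V) : [set a; b] = [set b; a].
Proof. by rewrite setUC. Qed.

Lemma sep_addx F' A B S x y : sep F' A B S -> sep ([set x; y] |: F') A B (x |: S).
Proof.
move/sepP => H; apply/sepP => a b aA bB; rewrite in_setU1 negb_or => /andP[ax aS].
apply: contra (H a b aA bB aS); apply: connect_mono => c d /andP[/andP[h cS] dS].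
move: cS dS; rewrite !in_setU1 !negb_or => /andP[cx cS] /andP[dx dS].
rewrite /adjX cS dS !andbT; move: h; rewrite /adj in_setU1 => /orP[/eqP E|] //.
have : x \in [set c; d] by rewrite E set21.
by rewrite !inE ![x == _]eq_sym (negbTE cx) (negbTE dx).
Qed.

Lemma sep_addy F' A B S x y : sep F' A B S -> sep ([set x; y] |: F') A B (y |: S).
Proof. by rewrite set2C; apply: sep_addx. Qed.

Lemma sep_lift F' A B S x y Z : sep F' A B S -> y \notin reach F' A S ->
  sep F' A (x |: S) Z -> sep ([set x; y] |: F') A B Z.
Proof.
move=> sS yC /sepP H3; apply/sepP => a b aA bB aZ; apply/negP => cab.
case: (boolP (a \in x |: S)) => [axS | naxS].
  by move/negP: (H3 a a aA axS aZ); apply; apply: connect0.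
pose K := [set z | connect (adjX F' (Z :|: (x |: S))) a z].
have aS : a \notin S by apply: contra naxS => h; rewrite in_setU1 h orbT.
have Kreach : forall z, z \in K -> z \in reach F' A S.
  move=> z; rewrite inE => c; apply/reachP; exists a; split => //.
  apply: connect_mono c; apply: adjX_mono => //.
  by apply/subsetP => t tS; rewrite !inE tS !orbT.
have aK : a \in K by rewrite inE connect0.
have bK : b \notin K by apply/negP => /Kreach /(reach_B sS); rewrite bB.
move/connectP: cab => [p pth blast].
have bl : ~~ (fun t => t \in K) (last a p) by rewrite -blast.
have [z [z' [hzz' zK z'K]]] := cross (P := fun t => t \in K) pth aK bl.
have aZxS : a \notin Z :|: (x |: S) by rewrite in_setU negb_or aZ naxS.
have zn : z \notin Z :|: (x |: S) by move: zK; rewrite inE; apply: connX_notin.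
have zy : z != y by apply: contraNneq yC => <-; apply: Kreach.
have zx : z != x by apply: contra zn => /eqP ->; rewrite !inE eqxx !orbT.
move: hzz' => /andP[/andP[hadj zZ] z'Z].
have zF' : adj F' z z'.
  move: hadj; rewrite /adj in_setU1 => /orP[/eqP E|] //.
  have : z \in [set x; y] by rewrite -E set21.
  by rewrite !inE (negbTE zx) (negbTE zy).
have caz : connect (adjX F' Z) a z.
  move: zK; rewrite inE; apply: connect_mono; apply: adjX_mono => //.
  exact: subsetUl.
case: (boolP (z' \in x |: S)) => z'xS.
  move/negP: (H3 a z' aA z'xS aZ); apply; apply: connect_trans caz (connect1 _).
  by rewrite /adjX zF' zZ z'Z.
move/negP: z'K; apply; rewrite inE; move: zK; rewrite inE => zK.
apply: connect_trans zK (connect1 _).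
by rewrite /adjX zF' (negbTE zn) in_setU negb_or z'Z z'xS.
Qed.

Lemma adjIn_mono F F' W W' : F \subset F' -> W \subset W' -> subrel (adjIn F W) (adjIn F' W').
Proof.
move=> FF /subsetP WW a b /andP[/andP[h aW] bW].
by rewrite /adjIn (adj_sub FF h) (WW _ aW) (WW _ bW).
Qed.

Lemma conn_monoF F F' W : F \subset F' -> conn F W -> conn F' W.
Proof.
move=> FF /connP H; apply/connP => z z' zW z'W.
by apply: connect_mono (H z z' zW z'W); apply: adjIn_mono.
Qed.

Lemma connect_restrict (e : rel V) a c : connect e a c ->
  connect (fun x y => [&& e x y, connect e a x & connect e a y]) a c.
Proof.
move=> /connectP[p pth ->]; apply/connectP; exists p => //.
have H1 : all [pred z | connect e a z] (a :: p).
  by apply/allP => z zp /=; exact: (path_connect pth zp).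
apply: (sub_in_path _ H1 pth) => x y; rewrite !inE => Px Py exy.
by rewrite exy Px Py.
Qed.

Lemma trim F A T W a : conn F W -> a \in W -> a \in A ->
  (exists t0, t0 \in W /\ t0 \in T) ->
  exists W' t, [/\ W' \subset W, t \in W', t \in T,
    (forall z, z \in W' -> z \in T -> z = t) &
    [/\ conn F W', (exists a', a' \in W' /\ a' \in A) &
        (forall z, z \in W' -> z != t -> z \in reach F A T)]].
Proof.
move=> cW aW aA [t0 [t0W t0T]].
case: (boolP (a \in T)) => aT.
  exists [set a], a; split => //.
  - by rewrite sub1set.
  - by rewrite set11.
  - by move=> z /set1P.
  split.
  - by apply/connP => z z' /set1P -> /set1P ->; apply: connect0.
  - by exists a; rewrite set11.
  - by move=> z /set1P ->; rewrite eqxx.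
pose U := W :\: T.
pose K := [set z | connect (adjIn F U) a z].
have aU : a \in U by rewrite inE aT aW.
have KU : forall z, z \in K -> z \in U by move=> z; rewrite inE; apply: connIn_in.
have aK : a \in K by rewrite inE connect0.
have t0K : t0 \notin K by apply/negP => /KU; rewrite inE t0T.
move/connP: cW => /(_ a t0 aW t0W) /connectP[p pth plast].
have bl : ~~ (fun t => t \in K) (last a p) by rewrite -plast.
have [z [z' [hzz' zK z'K]]] := cross (P := fun t => t \in K) pth aK bl.
move: hzz' => /andP[/andP[hadj zW] z'W].
have z'T : z' \in T.
  apply: contraR z'K => nz'T.
  have zU := KU z zK.
  move: zK; rewrite inE => zK; rewrite inE.
  apply: connect_trans zK (connect1 _).
  by rewrite /adjIn hadj zU /U inE nz'T z'W.
have KW : K \subset W by apply/subsetP => c /KU; rewrite inE => /andP[].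
have Kfrom : forall c, c \in z' |: K -> connect (adjIn F (z' |: K)) a c.
  move=> c; rewrite in_setU1 => /orP[/eqP -> | cK].
    have hz' : adjIn F (z' |: K) z z' by rewrite /adjIn hadj !in_setU1 eqxx zK !orbT.
    move: zK; rewrite inE => /connect_restrict zK.
    apply: connect_trans _ (connect1 hz').
    apply: connect_mono zK => c1 c2 /and3P[/andP[/andP[h _] _] h1 h2].
    by rewrite /adjIn h !in_setU1 !inE h1 h2 !orbT.
  move: cK; rewrite inE => /connect_restrict c'.
  apply: connect_mono c' => c1 c2 /and3P[/andP[/andP[h _] _] h1 h2].
  by rewrite /adjIn h !in_setU1 !inE h1 h2 !orbT.
exists (z' |: K), z'; split => //.
- by rewrite subUset sub1set z'W KW.
- by rewrite setU11.
- move=> c; rewrite in_setU1 => /orP[/eqP -> // | /KU]; rewrite inE => /andP[cT _].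
  by rewrite (negbTE cT).
split.
- apply/connP => c c' cin c'in; apply: connect_trans (Kfrom c' c'in).
  by rewrite csymIn; apply: Kfrom.
- by exists a; rewrite in_setU1 aK orbT.
- move=> c; rewrite in_setU1 => /orP[/eqP -> | cK]; first by rewrite eqxx.
  move=> _; apply/reachP; exists a; split => //.
  move: cK; rewrite inE; apply: connect_mono => c1 c2 /andP[/andP[h h1] h2].
  by move: h1 h2; rewrite /adjX h !inE => /andP[-> _] /andP[-> _].
Qed.

End Menger.

Section Menger2.
Variable V : finType.
Implicit Types (F G : {set {set V}}) (A B S X W Z T : {set V}).

Lemma trim_fam F A T k Ws (d : V) : goodfam F A T k Ws -> #|T| = k ->
  exists pP : V -> {set V},
    (forall t, t \in T -> [/\ t \in pP t, (forall z, z \in pP t -> z \in T -> z = t),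
        conn F (pP t), (exists a, a \in pP t /\ a \in A) &
        (forall z, z \in pP t -> z != t -> z \in reach F A T)]) /\
    (forall t t', t \in T -> t' \in T -> t != t' -> [disjoint pP t & pP t']).
Proof.
case=> cWs disj good cT.
pose Ptr (W : {set V}) (q : {set V} * V) :=
  [&& q.1 \subset W, q.2 \in q.1, q.2 \in T,
      [forall z in q.1, (z \in T) ==> (z == q.2)] &
      [&& conn F q.1, [exists a, (a \in q.1) && (a \in A)] &
          [forall z in q.1, (z != q.2) ==> (z \in reach F A T)]]].
have PtrP : forall W q, Ptr W q -> [/\ q.1 \subset W, q.2 \in q.1, q.2 \in T,
      (forall z, z \in q.1 -> z \in T -> z = q.2) &
      [/\ conn F q.1, (exists a, a \in q.1 /\ a \in A) &
        (forall z, z \in q.1 -> z != q.2 -> z \in reach F A T)]].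
  move=> W q /and5P[h1 h2 h3 /forallP h4 /and3P[h5 /existsP[a /andP[a1 a2]] /forallP h7]].
  split => //.
    by move=> z zq zT; have /implyP/(_ zq)/implyP/(_ zT)/eqP := h4 z.
  split => //; first by exists a.
  by move=> z zq zn; have /implyP/(_ zq)/implyP/(_ zn) := h7 z.
have Pex : forall W, W \in Ws -> exists q, Ptr W q.
  move=> W WW; have [cW [a [aW aA]] [b [bW bT]]] := good W WW.
  have [W' [t [h1 h2 h3 h4 [h5 [a' [a'1 a'2]] h7]]]] := trim cW aW aA (ex_intro _ b (conj bW bT)).
  exists (W', t); apply/and5P; split => //.
    by apply/forallP => z; apply/implyP => zW; apply/implyP => zT; rewrite (h4 z zW zT).
  apply/and3P; split => //; first by apply/existsP; exists a'; rewrite a'1 a'2.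
  by apply/forallP => z; apply/implyP => zW; apply/implyP; apply: h7.
pose g W := odflt (W, d) [pick q | Ptr W q].
have gP : forall W, W \in Ws -> Ptr W (g W).
  move=> W WW; rewrite /g; case: pickP => [q Hq | H] //=.
  by have [q Hq] := Pex W WW; rewrite H in Hq.
have ginj : {in Ws &, injective (fun W => (g W).2)}.
  move=> W1 W2 W1in W2in /= E; apply/eqP; apply: contraT => ne.
  have [s1 i1 _ _ _] := PtrP _ _ (gP W1 W1in).
  have [s2 i2 _ _ _] := PtrP _ _ (gP W2 W2in).
  have z1 : (g W1).2 \in W1 by apply: (subsetP s1).
  have z2 : (g W1).2 \in W2 by rewrite E; apply: (subsetP s2).
  by move/disjP: (disj W1 W2 W1in W2in ne) => /(_ _ z1 z2).
pose I := [set (g W).2 | W in Ws].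
have IT : I \subset T.
  by apply/subsetP => t /imsetP[W WW ->]; have [] := PtrP _ _ (gP W WW).
have cI : #|I| = #|T| by rewrite card_in_imset // cWs cT.
have TI : forall t, t \in T -> t \in I by move=> t; rewrite (subset_cardP cI IT).
pose Wof t := odflt set0 [pick W in Ws | (g W).2 == t].
have WofP : forall t, t \in T -> Wof t \in Ws /\ (g (Wof t)).2 = t.
  move=> t /TI /imsetP[W WW Et]; rewrite /Wof; case: pickP => [W' /andP[W'in /eqP E] | H] //=.
  by have := H W; rewrite WW Et eqxx.
exists (fun t => (g (Wof t)).1); split.
  move=> t tT; have [Win Et] := WofP t tT.
  have [h1 h2 h3 h4 [h5 h6 h7]] := PtrP _ _ (gP _ Win); rewrite Et in h2 h3 h4 h7.
  by split.
move=> t t' tT t'T ne; have [Win Et] := WofP t tT; have [W'in Et'] := WofP t' t'T.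
have [s1 _ _ _ _] := PtrP _ _ (gP _ Win); have [s2 _ _ _ _] := PtrP _ _ (gP _ W'in).
apply: disjointW s1 s2 _; apply: disj => //.
by apply: contraNneq ne => E; rewrite -Et -Et' E.
Qed.

Lemma conn_union F W1 W2 z1 z2 : conn F W1 -> conn F W2 -> z1 \in W1 -> z2 \in W2 ->
  connect (adjIn F (W1 :|: W2)) z1 z2 -> conn F (W1 :|: W2).
Proof.
move=> /connP c1 /connP c2 z1W z2W c12.
have sub1 : subrel (adjIn F W1) (adjIn F (W1 :|: W2)) by apply: adjIn_mono => //; exact: subsetUl.
have sub2 : subrel (adjIn F W2) (adjIn F (W1 :|: W2)) by apply: adjIn_mono => //; exact: subsetUr.
have from1 : forall c, c \in W1 :|: W2 -> connect (adjIn F (W1 :|: W2)) z1 c.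
  move=> c; rewrite in_setU => /orP[cW | cW].
    by apply: connect_mono (c1 _ _ z1W cW).
  by apply: connect_trans c12 _; apply: connect_mono (c2 _ _ z2W cW).
apply/connP => c c' cin c'in; apply: connect_trans (from1 c' c'in).
by rewrite csymIn; apply: from1.
Qed.

Lemma menger_step F' A B S x y k
  (IH : forall A' B', (forall Z, sep F' A' B' Z -> k <= #|Z|) ->
          exists Ws, goodfam F' A' B' k Ws)
  (hsep : forall Z, sep ([set x; y] |: F') A B Z -> k <= #|Z|) :
  sep F' A B S -> x \notin S -> y \notin S -> x != y -> #|S|.+1 = k ->
  y \notin reach F' A S -> x \notin reach F' B S ->
  exists Ws, goodfam ([set x; y] |: F') A B k Ws.
Proof.
move=> sS xS yS xy cS yC xD.
set F := [set x; y] |: F'.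
have FF' : F' \subset F by apply: subsetUr.
have eF : adj F x y by rewrite /adj setU11.
have cxS : #|x |: S| = k by rewrite cardsU1 xS.
have cyS : #|y |: S| = k by rewrite cardsU1 yS.
have [WsP gP] : exists Ws, goodfam F' A (x |: S) k Ws.
  by apply: IH => Z hZ; apply: hsep; exact: sep_lift sS yC hZ.
have [WsQ gQ] : exists Ws, goodfam F' B (y |: S) k Ws.
  apply: IH => Z hZ; apply: hsep; apply: sep_sym.
  rewrite /F set2C; exact: sep_lift (sep_sym sS) xD hZ.
have [pP [hP dP]] := trim_fam x gP cxS.
have [pQ [hQ dQ]] := trim_fam y gQ cyS.
have SxS : S \subset x |: S by apply: subsetUr.
have SyS : S \subset y |: S by apply: subsetUr.
pose sg t := if t == x then y else t.
have sgT : forall t, t \in x |: S -> sg t \in y |: S.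
  move=> t; rewrite /sg in_setU1; case: eqP => [_ _|_ /= tS]; first by rewrite setU11.
  by rewrite in_setU1 tS orbT.
have sgS : forall t, t \in x |: S -> sg t \in S -> sg t = t /\ t \in S.
  move=> t; rewrite /sg in_setU1; case: eqP => [_ _|_ /= tS]; first by rewrite (negbTE yS).
  by [].
have sginj : {in x |: S &, injective sg}.
  move=> t1 t2 t1in t2in; rewrite /sg.
  case: (t1 =P x) => [e1 | /eqP t1x]; case: (t2 =P x) => [e2 | /eqP t2x].
  - by rewrite e1 e2.
  - move=> E; move: t2in; rewrite in_setU1 (negbTE t2x) /= -E => yS'.
    by rewrite yS' in yS.
  - move=> E; move: t1in; rewrite in_setU1 (negbTE t1x) /= E => yS'.
    by rewrite yS' in yS.
  - by [].
have cross : forall t t' z, t \in x |: S -> t' \in y |: S -> z \in pP t -> z \in pQ t' ->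
    [/\ z = t, z = t' & z \in S].
  move=> t t' z tin t'in zP zQ.
  have [_ _ _ _ rP] := hP t tin; have [_ _ _ _ rQ] := hQ t' t'in.
  case: (z =P t) => [zt | /eqP zt]; case: (z =P t') => [zt' | /eqP zt'].
  - split => //; move: tin; rewrite in_setU1 => /orP[/eqP tx | //].
      by move: t'in; rewrite -zt' zt tx in_setU1 (negbTE xS) orbF (negbTE xy).
    by rewrite zt.
  - have := reach_mono SyS (rQ z zQ zt'); move: tin; rewrite -zt in_setU1 => /orP[/eqP -> | zS].
      by rewrite (negbTE xD).
    by move/reach_notin; rewrite zS.
  - have := reach_mono SxS (rP z zP zt); move: t'in; rewrite -zt' in_setU1 => /orP[/eqP -> | zS].
      by rewrite (negbTE yC).
    by move/reach_notin; rewrite zS.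
  - by case: (reach_disj sS (reach_mono SxS (rP z zP zt)) (reach_mono SyS (rQ z zQ zt'))).
pose Rt t := pP t :|: pQ (sg t).
have Rdisj : forall t1 t2, t1 \in x |: S -> t2 \in x |: S -> t1 != t2 -> [disjoint Rt t1 & Rt t2].
  move=> t1 t2 t1in t2in ne; apply/disjP => z; rewrite !in_setU => /orP[zP1|zQ1] /orP[zP2|zQ2].
  - by move/disjP: (dP t1 t2 t1in t2in ne) => /(_ z zP1 zP2).
  - have [e1 e2 e3] := cross t1 (sg t2) z t1in (sgT t2 t2in) zP1 zQ2.
    have e2S : sg t2 \in S by rewrite -e2.
    have [e4 _] := sgS t2 t2in e2S.
    by rewrite -e1 e2 e4 eqxx in ne.
  - have [e1 e2 e3] := cross t2 (sg t1) z t2in (sgT t1 t1in) zP2 zQ1.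
    have e2S : sg t1 \in S by rewrite -e2.
    have [e4 _] := sgS t1 t1in e2S.
    by rewrite -e4 -e2 e1 eqxx in ne.
  - have ne' : sg t1 != sg t2 by apply: contra ne => /eqP /sginj -> //.
    by move/disjP: (dQ _ _ (sgT t1 t1in) (sgT t2 t2in) ne') => /(_ z zQ1 zQ2).
have tR : forall t, t \in x |: S -> t \in Rt t.
  by move=> t tin; have [h _ _ _ _] := hP t tin; rewrite in_setU h.
exists [set Rt t | t in x |: S]; split.
- rewrite card_in_imset ?cxS // => t1 t2 t1in t2in E; apply/eqP; apply: contraT => ne.
  have z1 := tR t1 t1in; have z2 : t1 \in Rt t2 by rewrite -E.
  by move/disjP: (Rdisj t1 t2 t1in t2in ne) => /(_ _ z1 z2).
- move=> W1 W2 /imsetP[t1 t1in ->] /imsetP[t2 t2in ->] ne; apply: Rdisj => //.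
  by apply: contraNneq ne => ->.
move=> W /imsetP[t tin ->].
have [hPt _ cP [a [aP aA]] _] := hP t tin.
have [hQt _ cQ [b [bQ bB]] _] := hQ (sg t) (sgT t tin).
split; [ | by exists a; rewrite in_setU aP | by exists b; rewrite in_setU bQ orbT].
apply: (conn_union (conn_monoF FF' cP) (conn_monoF FF' cQ) hPt hQt).
rewrite /sg; case: (t =P x) => [E | _]; last by apply: connect0.
apply: connect1; rewrite /adjIn E eF !in_setU.
by move: hPt hQt; rewrite /sg E eqxx => -> ->; rewrite orbT.
Qed.

Lemma extend_set (X0 Y : {set V}) m : X0 \subset Y -> #|X0| <= m <= #|Y| ->
  exists X, [/\ X0 \subset X, X \subset Y & #|X| = m].
Proof.
move=> sub /andP[h1 h2]; move: {2}(m - #|X0|) (erefl (m - #|X0|)) => d.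
elim: d X0 sub h1 => [|d IH] X0 sub h1 hd.
  by exists X0; split => //; apply/eqP; rewrite eqn_leq h1 -subn_eq0 hd.
have lt : #|X0| < #|Y| by lia.
have [z /andP[zX0 zY]] : exists z, (z \notin X0) && (z \in Y).
  apply/existsP; apply: contraTT lt => /existsPn H; rewrite -leqNgt.
  by apply: subset_leq_card; apply/subsetP => z zY; have := H z; rewrite zY andbT negbK.
have a1 : z |: X0 \subset Y by rewrite subUset sub1set zY sub.
have a2 : #|z |: X0| <= m by rewrite cardsU1 zX0; lia.
have a3 : m - #|z |: X0| = d by rewrite cardsU1 zX0; lia.
have [X [s1 s2 c]] := IH (z |: X0) a1 a2 a3.
by exists X; split => //; apply: subset_trans s1; apply: subsetUr.
Qed.

Lemma menger_base F A B k : F = set0 -> (forall S, sep F A B S -> k <= #|S|) ->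
  exists Ws, goodfam F A B k Ws.
Proof.
move=> F0 hS.
have sAB : sep F A B (A :&: B).
  apply/sepP => a b aA bB aS; apply/negP => c.
  have iso : forall w, ~~ adjX F (A :&: B) a w by move=> w; rewrite /adjX /adj F0 inE.
  have ba := isolated_connect iso c; subst b; by rewrite inE aA bB in aS.
have hk : #|@set0 V| <= k <= #|A :&: B| by rewrite cards0 (hS _ sAB).
have [Y [_ YAB cY]] := extend_set (sub0set (A :&: B)) hk.
  exists [set [set z] | z in Y]; split.
  - by rewrite card_in_imset // => z1 z2 _ _; apply: set1_inj.
  - move=> W1 W2 /imsetP[z1 _ ->] /imsetP[z2 _ ->] ne; apply/disjP => z /set1P -> /set1P E.
    by rewrite E eqxx in ne.
  - move=> W /imsetP[z zY ->]; have := subsetP YAB z zY; rewrite inE => /andP[zA zB].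
    split; [ | by exists z; rewrite set11 | by exists z; rewrite set11].
    by apply/connP => c c' /set1P -> /set1P ->; apply: connect0.
Qed.

End Menger2.

Section Menger3.
Variable V : finType.
Implicit Types (F G : {set {set V}}) (A B S X W Z T : {set V}).

Lemma uniq_path_of (e : rel V) x y : connect e x y ->
  exists p, [/\ path e x p, uniq (x :: p) & last x p = y].
Proof. by move/connectP=> [p pth ->]; case: (shortenP pth) => p' h1 h2 _; exists p'. Qed.

Lemma path_pred (e : rel V) x p z : path e x p -> z \in p -> exists c, e c z.
Proof.
elim: p x => //= y p IH x /andP[exy pth]; rewrite inE => /orP[/eqP -> | zp].
  by exists x.
exact: IH pth zp.
Qed.

Lemma menger n : forall F A B k, #|F| <= n -> simple_graph F ->
  (forall S, sep F A B S -> k <= #|S|) -> exists Ws, goodfam F A B k Ws.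
Proof.
elim: n => [|n IH] F A B k cF sF hS.
  by apply: menger_base => //; apply/eqP; rewrite -cards_eq0 -leqn0.
case: (set_0Vmem F) => [F0 | [e eF]]; first exact: menger_base.
have [x [y [xy eE]]] : exists x y, x != y /\ e = [set x; y].
  by apply: edge2; exact: (implyP (forallP sF e) eF).
set F' := F :\ e.
have cF' : #|F'| <= n by move: cF; rewrite (cardsD1 e F) eF.
have sF' : simple_graph F'.
  apply/forallP => f; apply/implyP => /setD1P[_ fF]; exact: (implyP (forallP sF f) fF).
have FE : F = [set x; y] |: F' by rewrite /F' -eE setD1K.
have IH' := fun A' B' => IH F' A' B' k cF' sF'.
have FF' : F' \subset F by apply: subD1set.
case: (boolP [exists S : {set V}, sep F' A B S && (#|S| < k)]) =>
  [/existsP[S /andP[sS cS]] | /existsPn hn]; last first.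
  have hZ : forall Z, sep F' A B Z -> k <= #|Z|.
    by move=> Z hZ; have := hn Z; rewrite hZ /= -leqNgt.
  have [Ws [c1 c2 c3]] := IH' A B hZ.
  exists Ws; split => // W Win; have [h1 h2 h3] := c3 W Win; split => //.
  exact: conn_monoF FF' h1.
rewrite FE in hS *.
have hx := hS _ (sep_addx x y sS); rewrite cardsU1 in hx.
have hy := hS _ (sep_addy x y sS); rewrite cardsU1 in hy.
have xS : x \notin S by move: hx cS; case: (x \in S) => /=; lia.
have yS : y \notin S by move: hy cS; case: (y \in S) => /=; lia.
have cSk : #|S|.+1 = k by move: hx cS; rewrite xS /=; lia.
have closedF : forall z z', z \in reach F' A S -> adjX ([set x; y] |: F') S z z' ->
    [set z; z'] = [set x; y] \/ z' \in reach F' A S.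
  move=> z z' zC /andP[/andP[h zS'] z'S]; move: h; rewrite /adj in_setU1 => /orP[/eqP E | h].
    by left.
  by right; apply: reach_closed zC _; rewrite /adjX /adj h zS' z'S.
have Asub : forall a, a \in A -> a \notin S -> a \in reach F' A S.
  by move=> a aA aS; apply/reachP; exists a; split => //; apply: connect0.
have Bno : forall z, z \in reach F' A S -> z \notin B by move=> z; apply: reach_B sS.
have notboth : ~ (x \in reach F' A S /\ y \in reach F' A S).
  case=> xC yC.
  have : sep ([set x; y] |: F') A B S.
    apply: (sep_closure Asub Bno) => z z' zC h.
    case: (closedF z z' zC h) => // E.
    have : z' \in [set x; y] by rewrite -E set22.
    by case/set2P => ->.
  by move/hS; rewrite leqNgt cS.
have notnone : ~ (x \notin reach F' A S /\ y \notin reach F' A S).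
  case=> xC yC.
  have : sep ([set x; y] |: F') A B S.
    apply: (sep_closure Asub Bno) => z z' zC h.
    case: (closedF z z' zC h) => // E.
    have : z \in [set x; y] by rewrite -E set21.
    by case/set2P => ?; subst z; [rewrite zC in xC | rewrite zC in yC].
  by move/hS; rewrite leqNgt cS.
case: (boolP (y \in reach F' A S)) => yC.
  have xC : x \notin reach F' A S by apply/negP => xC; apply: notboth.
  have yD : y \notin reach F' B S by apply/negP => yD; apply: (reach_disj sS yC yD).
  have hS' : forall Z, sep ([set y; x] |: F') A B Z -> k <= #|Z| by rewrite -set2C.
  have yx : y != x by rewrite eq_sym.
  by rewrite set2C; apply: (menger_step IH' hS' sS yS xS yx cSk xC yD).
have xC : x \in reach F' A S by apply: contraT => xC; exfalso; apply: notnone.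
have xD : x \notin reach F' B S by apply/negP => xD; apply: (reach_disj sS xC xD).
exact: (menger_step IH' hS sS xS yS xy cSk yC xD).
Qed.

Lemma build (Q : seq V -> bool) (I : seq V -> seq V) (l : seq {set V}) :
  uniq l -> (forall W1 W2, W1 \in l -> W2 \in l -> W1 != W2 -> [disjoint W1 & W2]) ->
  (forall W, W \in l -> exists r, [/\ Q r, (exists z, z \in I r) & {subset I r <= W}]) ->
  exists rs, [/\ size rs = size l, all Q rs, uniq rs &
     pairwise (fun r1 r2 => [disjoint I r1 & I r2]) rs] /\
     (forall r, r \in rs -> exists2 W, W \in l & {subset I r <= W}).
Proof.
elim: l => [|W l IH] /=.
  by move=> _ _ _; exists [::]; split.
case/andP => Wl ul disj hr.
have [rs [[c1 c2 c3 c4] c5]] : exists rs, [/\ size rs = size l, all Q rs, uniq rs &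
     pairwise (fun r1 r2 => [disjoint I r1 & I r2]) rs] /\
     (forall r, r \in rs -> exists2 W, W \in l & {subset I r <= W}).
  apply: IH => //.
    by move=> W1 W2 W1l W2l; apply: disj; rewrite inE ?W1l ?W2l orbT.
  by move=> W' W'l; apply: hr; rewrite inE W'l orbT.
have [r [Qr [z zr] rW]] := hr W (mem_head _ _).
have dr : forall r', r' \in rs -> [disjoint I r & I r'].
  move=> r' r'rs; have [W' W'l r'W'] := c5 r' r'rs.
  have WW' : W != W' by apply: contraNneq Wl => ->.
  have W'in : W' \in W :: l by rewrite inE W'l orbT.
  apply/disjP => t t1 t2.
  by move/disjP: (disj W W' (mem_head _ _) W'in WW') => /(_ t (rW t t1) (r'W' t t2)).
exists (r :: rs); split; first split => //=.
- by rewrite c1.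
- by rewrite Qr.
- rewrite c3 andbT; apply/negP => rrs.
  by move/disjP: (dr r rrs) => /(_ z zr zr).
- by rewrite c4 andbT; apply/allP.
move=> r'; rewrite inE => /orP[/eqP -> | r'rs]; first by exists W; rewrite ?mem_head.
by have [W' W'l h] := c5 r' r'rs; exists W' => //; rewrite inE W'l orbT.
Qed.

End Menger3.

Section UV.
Variable V : finType.
Implicit Types (F G : {set {set V}}) (A B S X W Z T : {set V}).

Lemma menger_uv F u v m : simple_graph F -> u != v -> [set u; v] \notin F ->
  at_most_disjoint_paths F u v m ->
  exists X : {set V}, [/\ u \notin X, v \notin X, #|X| <= m & ~~ connect (adjX F X) u v].
Proof.
move=> sF uv uvF hat.
pose G' := [set f in F | (u \notin f) && (v \notin f)].
pose A := [set a | adj F u a]; pose B := [set b | adj F v b].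
have G'F : G' \subset F by apply/subsetP => f; rewrite inE => /andP[].
have sG' : simple_graph G'.
  by apply/forallP => f; apply/implyP => /(subsetP G'F) fF; exact: (implyP (forallP sF f) fF).
have edgeF : forall a b, adj F a b -> a != b.
  move=> a b h; have := implyP (forallP sF _) h; rewrite /is_edge cards2.
  by case: (a != b).
have G'uv : forall c d, adj G' c d -> [/\ c != u, c != v, d != u & d != v].
  move=> c d; rewrite /adj inE => /and3P[_ hu hv].
  by split; [apply: contraNneq hu => <- | apply: contraNneq hv => <- |
             apply: contraNneq hu => <- | apply: contraNneq hv => <-];
     rewrite !inE eqxx ?orbT.
case: (boolP [exists S : {set V}, sep G' A B S && (#|S| <= m)]) =>
  [/existsP[S /andP[sS cS]] | /existsPn hn].
  exists (S :\: [set u; v]); split.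
  - by rewrite !inE eqxx.
  - by rewrite !inE eqxx orbT.
  - by apply: leq_trans (subset_leq_card (subsetDl S _)) cS.
  apply/negP => /uniq_path_of [p [pth un lastp]].
  case: p pth un lastp => [|z1 q] /=; first by move=> _ _ E; rewrite E eqxx in uv.
  case/andP => huz1 pth un lastp.
  have z1A : z1 \in A by rewrite inE; case/andP: huz1 => /andP[].
  case/lastP: q pth un lastp => [|q' z] /=.
    move=> _ _ E; subst z1; move: huz1 => /andP[/andP[h _] _].
    by rewrite /adj in h; rewrite h in uvF.
  rewrite last_rcons => pth un E; subst z.
  move: pth; rewrite rcons_path => /andP[pth hlast].
  set b := last z1 q' in hlast.
  have bB : b \in B by rewrite inE adj_sym; case/andP: hlast => /andP[].
  move: un => /and3P[h1 h2 h3].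
  have uq : u \notin z1 :: q'.
    by apply: contra h1; rewrite !inE mem_rcons inE => /orP[->|->]; rewrite ?orbT.
  have vq : v \notin z1 :: q'.
    rewrite inE negb_or; apply/andP; split.
      by apply: contra h2 => /eqP <-; rewrite mem_rcons mem_head.
    by move: h3; rewrite rcons_uniq => /andP[].
  have Pall : all (fun z => (z != u) && (z != v)) (z1 :: q').
    by apply/allP => z zq; apply/andP; split;
      [apply: contraNneq uq => <- | apply: contraNneq vq => <-].
  have pth' : path (adjX G' S) z1 q'.
    apply: (sub_in_path _ Pall pth) => c d /andP[cu cv] /andP[du dv] /andP[/andP[h cX] dX].
    have cS0 : c \notin S.
      by apply: contra cX => cS1; rewrite in_setD cS1 !inE negb_or cu cv.
    have dS0 : d \notin S.
      by apply: contra dX => dS1; rewrite in_setD dS1 !inE negb_or du dv.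
    rewrite /adjX cS0 dS0 !andbT /adj inE; rewrite /adj in h; rewrite h /= !inE !negb_or.
    by rewrite ![u == _]eq_sym ![v == _]eq_sym cu du cv dv.
  have z1S : z1 \notin S.
    have /andP[z1u z1v] := allP Pall z1 (mem_head _ _).
    move: huz1 => /andP[_ hz]; apply: contra hz => zS.
    by rewrite in_setD zS !inE negb_or z1u z1v.
  by move/sepP: sS => /(_ z1 b z1A bB z1S); rewrite (_ : connect _ z1 b) //; apply/connectP; exists q'.
have hm : forall S, sep G' A B S -> m.+1 <= #|S|.
  by move=> S hS; have := hn S; rewrite hS /= -ltnNge.
have [Ws [cWs disj good]] := menger (leqnn #|G'|) sG' hm.
have hr : forall W, W \in enum Ws -> exists r, [/\ uv_path F u v r,
    (exists z, z \in interior v r) & {subset interior v r <= W}].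
  move=> W; rewrite mem_enum => Win; have [cW [a [aW aA]] [b [bW bB]]] := good W Win.
  have [p [pth un lastp]] := uniq_path_of ((connP _ _ cW) a b aW bW).
  have pW : forall z, z \in a :: p -> z \in W.
    by move=> z zp; apply: connIn_in aW (path_connect pth zp).
  have auv : a != u /\ a != v.
    move: aA; rewrite inE => h; split; first by rewrite eq_sym; apply: edgeF h.
    by apply: contraNneq uvF => E; rewrite -E.
  have puv : forall z, z \in a :: p -> z != u /\ z != v.
    move=> z; rewrite inE => /orP[/eqP -> // | zp].
    have [c /andP[/andP[h _] _]] := path_pred pth zp.
    by have [_ _ ? ?] := G'uv c z h.
  have pF : path (adj F) a p.
    by apply: sub_path pth => c d /andP[/andP[h _] _]; apply: adj_sub G'F _ _ h.
  have nv : v \notin a :: p by apply/negP => /puv [_]; rewrite eqxx.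
  have nu : u \notin a :: p by apply/negP => /puv []; rewrite eqxx.
  have int : interior v (a :: rcons p v) = a :: p.
    rewrite /interior -rcons_cons filter_rcons.
    have -> : predC1 v v = false by rewrite /= eqxx.
    apply/all_filterP/allP => z zp /=; by have [] := puv z zp.
  exists (a :: rcons p v); split.
  - apply/and3P; split.
    + rewrite /= rcons_path pF lastp; move: aA bB; rewrite !inE => -> bB /=.
      by rewrite adj_sym.
    + by rewrite /= last_rcons.
    + by rewrite -rcons_cons cons_uniq rcons_uniq mem_rcons in_cons negb_or uv nu nv un.
  - by exists a; rewrite int mem_head.
  - by rewrite int => z /pW.
have disj' : forall W1 W2, W1 \in enum Ws -> W2 \in enum Ws -> W1 != W2 -> [disjoint W1 & W2].
  by move=> W1 W2; rewrite !mem_enum; apply: disj.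
have [rs [[s1 s2 s3 s4] _]] := build (enum_uniq _) disj' hr.
have := hat rs (conj s3 (conj s2 s4)).
by rewrite s1 -cardE cWs ltnn.
Qed.

End UV.

Section Part2.
Variable V : finType.
Variable R : realFieldType.

Lemma notin_take_index (s : seq {set V}) e i : i = index e s -> e \notin take i s.
Proof.
move=> ->; apply/negP => h.
set j := index e (take (index e s) s).
have jlt : j < size (take (index e s) s) by rewrite /j index_mem.
have sz : size (take (index e s) s) <= index e s by rewrite size_take; case: ltnP.
have jl : j < find (pred1 e) s by apply: leq_trans jlt sz.
have := @before_find _ set0 (pred1 e) s j jl.
by rewrite -(nth_take set0 jl) nth_index //= eqxx.
Qed.

Lemma part2 (E : {set {set V}}) k : simple_graph E -> 1 <= k <= #|V|.-1 ->
  k_constructible k E -> exists w : {set V} -> R, good_weights w /\ E \subset Mk w k.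
Proof.
move=> sE /andP[k1 kn] [s [suniq [sE' hs]]].
pose w (e : {set V}) : R :=
  if e \in s then ((index e s).+1%:R)%R else ((size s + 1 + enum_rank e)%N%:R)%R.
have wgood : good_weights w.
  split.
    by move=> e _; rewrite /w; case: ifP => _; rewrite ltr0n // addnAC addn1.
  move=> e f _ _; rewrite /w; case: ifP => es; case: ifP => fs /eqP; rewrite eqr_nat => /eqP h.
  - by rewrite -(nth_index set0 es) -(nth_index set0 fs); case: h => ->.
  - have hi : index e s < size s by rewrite index_mem.
    clear -h hi; lia.
  - have hi : index f s < size s by rewrite index_mem.
    clear -h hi; lia.
  - by apply: enum_rank_inj; apply: val_inj; move/addnI: h.
exists w; split => //.
apply/subsetP => e eE.
have es : e \in s by rewrite sE'.
have ee : is_edge e by exact: (implyP (forallP sE e) eE).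
have [u [v [uv eE2]]] := edge2 ee.
pose i := index e s.
have isz : i < size s by rewrite index_mem.
have ei : nth set0 s i = e by rewrite nth_index.
have hat := hs i isz u v (etrans ei eE2).
set Fi := [set x in take i s] in hat.
have sFi : simple_graph Fi.
  apply/forallP => f; apply/implyP; rewrite inE => /mem_take; rewrite sE' => fE.
  exact: (implyP (forallP sE f) fE).
have eFi : [set u; v] \notin Fi by rewrite inE -eE2; apply: notin_take_index.
have [X0 [uX0 vX0 cX0 nc]] := menger_uv sFi uv eFi hat.
have X0sub : X0 \subset ~: [set u; v].
  apply/subsetP => z zX0; rewrite !inE negb_or.
  by apply/andP; split; [apply: contraTneq zX0 => -> | apply: contraTneq zX0 => ->].
have cC : #|~: [set u; v]| = #|V| - 2.
  have := cardsC [set u; v]; rewrite cards2 uv => h; clear -h; lia.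
have hk : #|X0| <= k.-1 <= #|~: [set u; v]|.
  rewrite cC; clear -cX0 k1 kn; lia.
have [X [X0X XY cX]] := extend_set X0sub hk.
apply/bigcupP; exists X; first by rewrite cX.
have uS : u \in ~: X by rewrite inE; apply/negP => /(subsetP XY); rewrite !inE eqxx.
have vS : v \in ~: X by rewrite inE; apply/negP => /(subsetP XY); rewrite !inE eqxx orbT.
have [T HT] := MST_exists w uS.
apply/bigcupP; exists T => //.
apply: contraT => eT.
have [st Tmin] := is_MSTP HT; have [H1 H2 H3] := (spanning_treeP _ _).1 st.
have [p [pth un lastp]] := uniq_path_of (H2 u v uS vS).
pose P := connect (adjX Fi X) u.
have Pv : ~~ P v.
  apply: contra nc; apply: connect_mono; apply: adjX_mono => //.
have := cross_uniq (P := P) pth un (@connect0 _ (adjX Fi X) u).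
rewrite lastp => /(_ Pv) [a [b [[hab Pa Pb ain bin] [q1 [q2 [[h1 h2 h3] [h4 h5 h6]]]]]]].
have fT : [set a; b] \in T by [].
have [fe fS] := H1 _ fT.
have ab : a != b by move: fe; rewrite /is_edge cards2; case: (a != b).
have aS : a \in ~: X by apply: (subsetP fS); rewrite set21.
have bS : b \in ~: X by apply: (subsetP fS); rewrite set22.
have fne : [set a; b] != e by apply/eqP => Ef; rewrite -Ef fT in eT.
have wlt : (w e < w [set a; b])%R.
  rewrite /w es; case: ifP => fs.
    2: by rewrite ltr_nat; apply: ltn_addr; rewrite addn1 ltnS.
  rewrite ltr_nat ltnS.
  case: (ltngtP (index [set a; b] s) i) => // [ji | ji].
    have fFi : [set a; b] \in Fi.
      rewrite inE -(nth_index set0 fs) -(nth_take set0 ji) mem_nth //.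
      by rewrite size_takel // ltnW.
    have : adjX Fi X a b by rewrite /adjX /adj fFi; move: aS bS; rewrite !inE => -> ->.
    by move/connect1 => c; move: Pb; rewrite /P (connect_trans Pa c).
  by move: fne; rewrite -ei -ji nth_index // eqxx.
have nuv : ~~ connect (adj (T :\ [set a; b])) u v.
  apply/negP => cuv; move/negP: (H3 _ a b fT erefl); apply.
  have cua : connect (adj (T :\ [set a; b])) u a.
    by apply/connectP; exists q1; [apply: path_del h3 h1 | rewrite h2].
  have cbv : connect (adj (T :\ [set a; b])) b v.
    apply/connectP; exists q2; last by rewrite h5.
    by rewrite set2C; apply: path_del h6 h4.
  rewrite csym in cua; rewrite csym in cbv.
  exact: connect_trans cua (connect_trans cuv cbv).
have st' := exchange st fT (erefl _) uv uS vS nuv.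
have eT' : [set u; v] \notin T :\ [set a; b] by rewrite -eE2 !inE negb_and eT orbT.
have := Tmin _ st'; rewrite weight_exch // -eE2 addrAC lerDr subr_ge0 => h.
by move: wlt; rewrite ltNge h.
Qed.

End Part2.

Unset Implicit Arguments.

Theorem theorem5 (R : realFieldType) (V : finType) :
  (forall (w : {set V} -> R) (k : nat),
      2 <= #|V| -> good_weights w -> 1 <= k <= #|V|.-1 ->
      k_constructible k (Mk w k)) /\
  (forall (E : {set {set V}}) (k : nat),
      simple_graph E -> 1 <= k <= #|V|.-1 ->
      k_constructible k E ->
      exists w : {set V} -> R, good_weights w /\ E \subset Mk w k).
Proof.
split.
  by move=> w k _ gw _; apply: part1.
by move=> E k sE hk hc; apply: part2.
Qed.
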